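(* Let $T(n)$ be the complete binary tree on $n$ vertices (every level except possibly the last completely filled, and the nodes of the last level as far left as possible), and let $D(n)$ be the digraph obtained from $T(n)$ by replacing each undirected edge $\{u,v\}$ by the two directed edges $(u,v)$ and $(v,u)$. Then $D(n)$ has zig-zag number at most $2$ (witnessed by a depth-first preorder of the vertices from the root), while its directed path-width is $\Omega(\log n)$.
   Context: A linear ordering $\omega=(v_1,\dots,v_n)$ of the vertices of a digraph is a $z$-topological ordering if every directed simple path has, for each $i$, at most $z$ edges with one endpoint in $\{v_1,\dots,v_i\}$ and the other in $\{v_{i+1},\dots,v_n\}$; the zig-zag number is the least such $z$. A directed path decomposition of $G=(V,E)$ is a sequence $X_1,\dots,X_p\subseteq V$ covering $V$, with $X_i\cap X_k\subseteq X_j$ for $i<j<k$, and such that for every edge $(u,v)$ there are $i\le j$ with $u\in X_i$, $v\in X_j$; its width is $\max_j|X_j|$, and the directed path-width is the minimum width. *)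

(* Defs.v *)
From mathcomp Require Import all_boot.
Set Implicit Arguments. Unset Strict Implicit. Unset Printing Implicit Defensive.

Section Digraphs.
Variable T : finType.
Variable E : rel T.

Definition is_ordering (w : seq T) : bool := uniq w && (size w == #|T|).

Definition simple_dpath (p : seq T) : bool :=
  uniq p && (if p is x :: q then path E x q else true).

Definition crossing (A : pred T) (p : seq T) : nat :=
  count (fun xy : T * T => (xy.1 \in A) != (xy.2 \in A)) (zip p (behead p)).

Definition z_topological (z : nat) (w : seq T) : Prop :=
  is_ordering w /\
  forall i : nat, forall p : seq T, simple_dpath p ->
    crossing (fun x => x \in take i w) p <= z.

(* Directed path decomposition X_1 .. X_p (given as a sequence, 0-indexed). *)
Definition is_dpd (X : seq {set T}) : Prop :=
  (forall v : T, exists2 i, i < size X & v \in nth set0 X i) /\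
  (forall i j k, i < j -> j < k -> k < size X ->
     nth set0 X i :&: nth set0 X k \subset nth set0 X j) /\
  (forall u v, E u v -> exists i j, [/\ i <= j, j < size X,
        u \in nth set0 X i & v \in nth set0 X j]).

Definition dpd_width (X : seq {set T}) : nat := \max_(B <- X) #|B|.

End Digraphs.

(* Complete binary tree on n vertices, in heap numbering 0..n-1:
   the parent of vertex i > 0 is (i-1)/2; this fills levels left to right. *)
Definition tree_parent (i : nat) : nat := i.-1./2.

Definition Dn_edge (n : nat) : rel 'I_n :=
  fun u v => ((0 < u) && (tree_parent u == v)) || ((0 < v) && (tree_parent v == u)).

(* Depth-first (left-first) preorder from the root 0; fuel n suffices. *)
Fixpoint preorder_aux (n fuel i : nat) : seq nat :=
  match fuel with
  | 0 => [::]
  | f.+1 => if i < n then i :: preorder_aux n f i.*2.+1 ++ preorder_aux n f i.*2.+2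
            else [::]
  end.

Definition preorder (n : nat) : seq 'I_n := pmap insub (preorder_aux n n 0).

(* Main.v *)
Require Import Defs.
From mathcomp Require Import all_boot.
From mathcomp Require Import all_boot zify.
Set Implicit Arguments. Unset Strict Implicit. Unset Printing Implicit Defensive.

(* arithmetic on heap ancestors *)
Definition subb (i h x : nat) : bool :=
  has (fun d => x.+1 %/ 2^d == i.+1) (iota 0 h.+1).

Lemma subbP i h x : reflect (exists2 d, d <= h & x.+1 %/ 2^d = i.+1) (subb i h x).
Proof.
apply: (iffP hasP) => [[d]|[d hd e]].
  by rewrite mem_iota add0n ltnS => /andP[_ hd] /eqP e; exists d.
by exists d; [rewrite mem_iota add0n ltnS hd | apply/eqP].
Qed.

Lemma div2S m d : m %/ 2 ^ d.+1 = m %/ 2 ^ d %/ 2.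
Proof. by rewrite expnSr divnMA. Qed.

Lemma subb_rec i h x :
  subb i h.+1 x = (x == i) || subb i.*2.+1 h x || subb i.*2.+2 h x.
Proof.
apply/subbP/idP.
  move=> [[|d] hd e].
    by rewrite expn0 divn1 in e; case: e => ->; rewrite eqxx.
  rewrite div2S in e.
  have [e1|e2] : x.+1 %/ 2^d = i.*2.+2 \/ x.+1 %/ 2^d = i.*2.+3 by lia.
    by apply/orP; left; apply/orP; right; apply/subbP; exists d.
  by apply/orP; right; apply/subbP; exists d.
case/orP => [/orP[/eqP ->|/subbP[d hd e]]|/subbP[d hd e]].
- by exists 0 => //; rewrite expn0 divn1.
- by exists d.+1 => //; rewrite div2S e; lia.
- by exists d.+1 => //; rewrite div2S e; lia.
Qed.

Lemma subb_mono i h x : subb i h x -> subb i h.+1 x.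
Proof. by move/subbP=> [d hd e]; apply/subbP; exists d => //; apply: leqW. Qed.

Lemma subb_self i h : subb i h i.
Proof. by apply/subbP; exists 0 => //; rewrite expn0 divn1. Qed.

Lemma subb_bound i h x : subb i h x -> x.+1 < i.+2 * 2^h.
Proof.
move/subbP=> [d hd e].
have : x.+1 < i.+2 * 2^d by rewrite -ltn_divLR ?expn_gt0 // e.
move/leq_trans; apply; apply: leq_mul => //; exact: leq_pexp2l.
Qed.

Lemma anc_rel m d e a b : m %/ 2^d = a -> m %/ 2^e = b ->
  exists k, a %/ 2^k = b \/ b %/ 2^k = a.
Proof.
move=> ea eb; case: (leqP d e) => hde.
  exists (e - d); left; rewrite -ea -divnMA -expnD subnKC //.
exists (d - e); right; rewrite -eb -divnMA -expnD subnKC //; exact: ltnW.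
Qed.

Lemma div2k_cases m k : m %/ 2^k = m \/ m %/ 2^k = m %/ 2 \/ m %/ 2^k <= m %/ 4.
Proof.
case: k => [|[|k]]; first by left; rewrite expn0 divn1.
  by right; left; rewrite expn1.
right; right; apply: leq_div2l => //.
by rewrite (_ : 4 = 2^2) // leq_pexp2l.
Qed.

Lemma div_le m k : m %/ 2^k <= m.
Proof. exact: leq_div. Qed.

Lemma incomp m d e P Q : m %/ 2^d = P -> m %/ 2^e = Q ->
  (forall k, P %/ 2^k <> Q) -> (forall k, Q %/ 2^k <> P) -> False.
Proof. by move=> ea eb h1 h2; have [k [/h1|/h2]] := anc_rel ea eb. Qed.

Lemma below m d P : m %/ 2^d = P -> m < P -> False.
Proof. by move=> <-; rewrite ltnNge div_le. Qed.
Section Width.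
Variable n : nat.
Variable X : seq {set 'I_n}.
Hypothesis HX : is_dpd (@Dn_edge n) X.

Definition hits p (P : pred nat) := exists x : 'I_n, x \in nth set0 X p /\ P x.
Definition IP (P : pred nat) := forall a q b, hits a P -> hits b P -> a <= q <= b -> hits q P.

Lemma in_bag_lt (x : 'I_n) p : x \in nth set0 X p -> p < size X.
Proof. by case: (ltnP p (size X)) => // h; rewrite nth_default // inE. Qed.

Lemma bag_interval (x : 'I_n) a q b :
  x \in nth set0 X a -> x \in nth set0 X b -> a <= q <= b -> x \in nth set0 X q.
Proof.
move=> ha hb /andP[h1 h2].
case: (ltnP a q) => h1'; last by have -> : q = a by apply/eqP; rewrite eqn_leq h1' h1.
case: (ltnP q b) => h2'; last by have -> : q = b by apply/eqP; rewrite eqn_leq h2' h2.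
have [_ [H _]] := HX.
have := H a q b h1' h2' (in_bag_lt hb).
by move/subsetP; apply; rewrite inE ha hb.
Qed.

Lemma IP_ext P Q : (forall x, P x = Q x) -> IP P -> IP Q.
Proof.
move=> e h a q b [x [hx1 hx2]] [y [hy1 hy2]] hq.
have [z [hz1 hz2]] : hits q P.
  by apply: (h a q b); [exists x; rewrite e | exists y; rewrite e|].
by exists z; rewrite -e.
Qed.

Lemma IP_single y : IP (pred1 y).
Proof.
move=> a q b [x [hx1 /eqP hx2]] [x' [hx1' /eqP hx2']] hq.
have ex : x' = x by apply: val_inj => /=; rewrite hx2 hx2'.
subst x'; exists x; split; last by apply/eqP.
exact: bag_interval hx1 hx1' hq.
Qed.

Lemma hits_mono p (P Q : pred nat) : (forall x, P x -> Q x) -> hits p P -> hits p Q.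
Proof. by move=> h [x [h1 h2]]; exists x; split => //; apply: h. Qed.

Lemma IP_union P Q : IP P -> IP Q -> (exists c, hits c P /\ hits c Q) ->
  IP (fun x => P x || Q x).
Proof.
move=> hP hQ [c [hcP hcQ]] a q b ha hb /andP[h1 h2].
have split1 p : hits p (fun x => P x || Q x) -> hits p P \/ hits p Q.
  by move=> [x [hx /orP[]]] h; [left|right]; exists x.
have lP p : hits p P -> hits p (fun x => P x || Q x).
  by apply: hits_mono => x ->.
have lQ p : hits p Q -> hits p (fun x => P x || Q x).
  by apply: hits_mono => x ->; rewrite orbT.
case: (split1 _ ha) => ha'; case: (split1 _ hb) => hb'.
- by apply: lP; apply: (hP a q b) => //; rewrite h1 h2.
- case: (leqP q c) => hqc.
    by apply: lP; apply: (hP a q c) => //; rewrite h1 hqc.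
  by apply: lQ; apply: (hQ c q b) => //; rewrite h2 ltnW.
- case: (leqP q c) => hqc.
    by apply: lQ; apply: (hQ a q c) => //; rewrite h1 hqc.
  by apply: lP; apply: (hP c q b) => //; rewrite h2 ltnW.
- by apply: lQ; apply: (hQ a q b) => //; rewrite h1 h2.
Qed.

Lemma edge_linked a b : a < n -> b < n -> 0 < b -> tree_parent b = a ->
  exists c, hits c (pred1 a) /\ hits c (pred1 b).
Proof.
move=> ha hb b0 e.
have [_ [_ H]] := HX.
have E1 : Dn_edge (Ordinal hb) (Ordinal ha) by rewrite /Dn_edge /= b0 e eqxx.
have E2 : Dn_edge (Ordinal ha) (Ordinal hb) by rewrite /Dn_edge /= b0 e eqxx orbT.
have [s [t [st _ hs ht]]] := H _ _ E1.
have [s' [t' [st' _ hs' ht']]] := H _ _ E2.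
case: (leqP t t') => htt.
  exists t; split; first by exists (Ordinal ha); split => //=.
  exists (Ordinal hb); split => //=.
  by apply: (bag_interval hs ht'); rewrite htt (leq_trans st).
exists t'; split; last by exists (Ordinal hb); split => //=.
exists (Ordinal ha); split => //=.
by apply: (bag_interval hs' ht); rewrite (ltnW htt) (leq_trans st').
Qed.

Definition cov p (P : pred nat) := #|[set x in nth set0 X p | P (val x)]|.
Definition good (P : pred nat) k := exists p, k <= cov p P.

Lemma cov_width p P : cov p P <= dpd_width X.
Proof.
case: (ltnP p (size X)) => hp; last first.
  rewrite /cov nth_default // (_ : [set x in set0 | _] = set0) ?cards0 //.
  by apply/setP => x; rewrite !inE.
apply: (leq_trans (subset_leq_card (_ : _ \subset nth set0 X p))).
  by apply/subsetP => x; rewrite inE => /andP[].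
by apply: (leq_bigmax_seq (nth set0 X p)) => //; rewrite mem_nth.
Qed.

Lemma cov_hits p P : 0 < cov p P -> hits p P.
Proof.
by rewrite card_gt0 => /set0Pn [x]; rewrite inE => /andP[h1 h2]; exists x.
Qed.

Lemma good_mono (P Q : pred nat) k k' : (forall x, P x -> Q x) -> k' <= k -> good P k -> good Q k'.
Proof.
move=> h hk [p hp]; exists p; apply: (leq_trans hk); apply: (leq_trans hp).
by apply: subset_leq_card; apply/subsetP => x; rewrite !inE => /andP[-> /h].
Qed.

Lemma mid (M B T : pred nat) k pa pb pc : IP M -> (forall x, B x -> M x -> False) ->
  hits pa M -> hits pc M -> pa <= pb <= pc -> k <= cov pb B ->
  (forall x, M x || B x -> T x) -> k.+1 <= cov pb T.
Proof.
move=> hM disj ha hc hb hk hT.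
have [w [hw1 hw2]] := hM _ _ _ ha hc hb.
apply: (leq_trans _ (proper_card (_ : [set x in nth set0 X pb | B (val x)] \proper _))).
  by rewrite ltnS.
apply/properP; split.
  by apply/subsetP => x; rewrite !inE => /andP[-> hB] /=; apply: hT; rewrite hB orbT.
exists w; first by rewrite inE hw1 /= hT // hw2.
by rewrite inE hw1 /=; apply/negP => hB; exact: (disj _ hB hw2).
Qed.

Lemma step (A B C T : pred nat) (v k : nat) : 0 < k ->
  IP (fun x => A x || (x == v) || B x) -> IP (fun x => A x || (x == v) || C x) ->
  IP (fun x => B x || (x == v) || C x) ->
  (forall x, B x -> A x || (x == v) || C x -> False) ->
  (forall x, A x -> B x || (x == v) || C x -> False) ->
  (forall x, C x -> A x || (x == v) || B x -> False) ->
  (forall x, A x || B x || C x || (x == v) -> T x) ->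
  good A k -> good B k -> good C k -> good T k.+1.
Proof.
move=> k0 hAB hAC hBC dB dA dC hT [pa ha] [pb hb] [pc hc].
have hh p (P M : pred nat) : k <= cov p P -> (forall x, P x -> M x) -> hits p M.
  move=> hk hPM; apply: hits_mono hPM _; apply: cov_hits; exact: leq_trans hk.
have [hmb|hmb] : (pa <= pb <= pc) || (pc <= pb <= pa) \/
           ~~ ((pa <= pb <= pc) || (pc <= pb <= pa)) by case: (_ || _); [left|right].
  exists pb; case/orP: hmb => hmb.
  - apply: (mid hAC dB _ _ hmb hb); [by apply: (hh _ _ _ ha) => x h; rewrite h ?orbT
    | by apply: (hh _ _ _ hc) => x h; rewrite h ?orbT
    | by move=> x; case/orP => [/orP[/orP[]|]|] h; apply: hT; rewrite h ?orbT].
  - apply: (mid hAC dB _ _ hmb hb); [by apply: (hh _ _ _ hc) => x h; rewrite h ?orbT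
    | by apply: (hh _ _ _ ha) => x h; rewrite h ?orbT
    | by move=> x; case/orP => [/orP[/orP[]|]|] h; apply: hT; rewrite h ?orbT].
have [hma|hma] : (pb <= pa <= pc) || (pc <= pa <= pb) \/
           ~~ ((pb <= pa <= pc) || (pc <= pa <= pb)) by case: (_ || _); [left|right].
  exists pa; case/orP: hma => hma.
  - apply: (mid hBC dA _ _ hma ha); [by apply: (hh _ _ _ hb) => x h; rewrite h ?orbT
    | by apply: (hh _ _ _ hc) => x h; rewrite h ?orbT
    | by move=> x; case/orP => [/orP[/orP[]|]|] h; apply: hT; rewrite h ?orbT].
  - apply: (mid hBC dA _ _ hma ha); [by apply: (hh _ _ _ hc) => x h; rewrite h ?orbT
    | by apply: (hh _ _ _ hb) => x h; rewrite h ?orbT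
    | by move=> x; case/orP => [/orP[/orP[]|]|] h; apply: hT; rewrite h ?orbT].
have hmc : (pa <= pc <= pb) || (pb <= pc <= pa).
  by move: hmb hma; lia.
exists pc; case/orP: hmc => hmc.
- apply: (mid hAB dC _ _ hmc hc); [by apply: (hh _ _ _ ha) => x h; rewrite h ?orbT
  | by apply: (hh _ _ _ hb) => x h; rewrite h ?orbT
  | by move=> x; case/orP => [/orP[/orP[]|]|] h; apply: hT; rewrite h ?orbT].
- apply: (mid hAB dC _ _ hmc hc); [by apply: (hh _ _ _ hb) => x h; rewrite h ?orbT
  | by apply: (hh _ _ _ ha) => x h; rewrite h ?orbT
  | by move=> x; case/orP => [/orP[/orP[]|]|] h; apply: hT; rewrite h ?orbT].
Qed.

Lemma noanc P Q : P <> Q -> P %/ 2 <> Q -> P %/ 4 < Q -> forall k, P %/ 2^k <> Q.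
Proof.
move=> h1 h2 h3 k; case: (div2k_cases P k) => [->|[->|h]] //.
by move=> e; move: h3; rewrite -e ltnNge h.
Qed.

Lemma disj2 a b g g' x : subb a g x -> subb b g' x ->
  (forall k, a.+1 %/ 2^k <> b.+1) -> (forall k, b.+1 %/ 2^k <> a.+1) -> False.
Proof. by move=> /subbP[d _ e1] /subbP[e _ e2]; apply: incomp e1 e2. Qed.

Lemma disj1 a g x : subb a g x -> x < a -> False.
Proof. by move=> /subbP[d _ e1] h; apply: (below e1). Qed.

Lemma parent_odd i : tree_parent i.*2.+1 = i.
Proof. by rewrite /tree_parent succnK -divn2; lia. Qed.
Lemma parent_even i : tree_parent i.*2.+2 = i.
Proof. by rewrite /tree_parent succnK -divn2; lia. Qed.

Lemma IP_tree h : forall i, i.+2 * 2^h <= n.+1 -> IP (subb i h).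
Proof.
elim: h => [|h IH] i hv.
  apply: (@IP_ext (pred1 i)) => [x|]; last exact: IP_single.
  by rewrite /subb /= expn0 divn1 orbF eqSS.
have hP : 0 < 2^h by rewrite expn_gt0.
move: hv; rewrite expnS => hv.
have hi : i < n by nia.
have h1 : i.*2.+1 < n by nia.
have h2 : i.*2.+2 < n by nia.
apply: (@IP_ext (fun x => (x == i) || subb i.*2.+1 h x || subb i.*2.+2 h x)) => [x|]; first by rewrite subb_rec.
apply: IP_union; first apply: IP_union.
- exact: IP_single.
- apply: IH; nia.
- have [c [hc1 hc2]] := edge_linked hi h1 isT (parent_odd i).
  exists c; split => //; apply: hits_mono hc2 => x /eqP ->; exact: subb_self.
- apply: IH; nia.
- have [c [hc1 hc2]] := edge_linked hi h2 isT (parent_even i).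
  exists c; split.
    by apply: hits_mono hc1 => x /eqP ->; rewrite eqxx.
  by apply: hits_mono hc2 => x /eqP ->; exact: subb_self.
Qed.

Lemma good_base i h : i < n -> good (subb i h) 1.
Proof.
move=> hi; have [H _] := HX; have [p _ hp] := H (Ordinal hi).
exists p; rewrite card_gt0; apply/set0Pn; exists (Ordinal hi).
by rewrite inE hp /= subb_self.
Qed.

Lemma good_tree m : forall h i, h <= m -> i.+2 * 2^h <= n.+1 -> good (subb i h) (h./2).+1.
Proof.
elim: m => [|m IH] h i hm hv.
  have hP : 0 < 2^h by rewrite expn_gt0.
  by move: hm; rewrite leqn0 => /eqP ->; apply: good_base; nia.
case: h hm hv => [|[|g]] hm hv.
- apply: good_base; rewrite expn0 in hv; lia.
- apply: good_base; rewrite expn1 in hv; lia.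
have hP : 0 < 2^g by rewrite expn_gt0.
move: hv; rewrite !expnS => hv.
have hi : i < n by nia.
have h1 : i.*2.+1 < n by nia.
have h2 : i.*2.+2 < n by nia.
have h3 : (i.*2.+1).*2.+1 < n by nia.
have hvA : ((i.*2.+1).*2.+1).+2 * 2^g <= n.+1 by nia.
have hvB : ((i.*2.+1).*2.+2).+2 * 2^g <= n.+1 by nia.
have hvv : (i.*2.+1).+2 * 2^g.+1 <= n.+1 by rewrite expnS; nia.
have hv2 : (i.*2.+2).+2 * 2^g.+1 <= n.+1 by rewrite expnS; nia.
set v := i.*2.+1.
set A := subb v.*2.+1 g.
set B := subb v.*2.+2 g.
pose C := fun x => (x == i) || subb i.*2.+2 g.+1 x.
have lAv : exists c, hits c A /\ hits c (pred1 v).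
  have [c [hc1 hc2]] := edge_linked h1 h3 isT (parent_odd v).
  exists c; split => //; apply: hits_mono hc2 => x /eqP ->; exact: subb_self.
have IPAv := IP_union (IP_tree hvA) (@IP_single v) lAv.
have h4 : v.*2.+2 < n by rewrite /v; nia.
have IPBv : IP (fun x => B x || pred1 v x).
  apply: IP_union (IP_tree hvB) (@IP_single v) _.
  have [c [hc1 hc2]] := edge_linked h1 h4 isT (parent_even v).
  exists c; split => //; apply: hits_mono hc2 => x /eqP ->; exact: subb_self.
have lvi (P : pred nat) : (forall x, x == v -> P x) -> exists c, hits c P /\ hits c (pred1 i).
  move=> hPv; have [c [hc1 hc2]] := edge_linked hi h1 isT (parent_odd i).
  by exists c; split => //; apply: hits_mono hc2 => x /eqP ->; apply: hPv.
have li2 (P : pred nat) : (forall x, x == i -> P x) -> exists c, hits c P /\ hits c (subb i.*2.+2 g.+1).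
  move=> hPi; have [c [hc1 hc2]] := edge_linked hi h2 isT (parent_even i).
  exists c; split; first by apply: hits_mono hc1 => x /eqP ->; apply: hPi.
  by apply: hits_mono hc2 => x /eqP ->; exact: subb_self.
have IPAC := IP_union (IP_union IPAv (@IP_single i) (lvi _ (fun x h => introT orP (or_intror h))))
  (IP_tree hv2) (li2 _ (fun x h => introT orP (or_intror h))).
have IPBC := IP_union (IP_union IPBv (@IP_single i) (lvi _ (fun x h => introT orP (or_intror h))))
  (IP_tree hv2) (li2 _ (fun x h => introT orP (or_intror h))).
apply: (@step A B C _ v) => //.
- apply: (@IP_ext (subb v g.+1)); last exact: IP_tree.
  by move=> x; rewrite subb_rec /A /B; case: (x == v); case: (subb _ g x); case: (subb _ g x).
- by apply: IP_ext IPAC => x /=; rewrite /C !orbA.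
- by apply: IP_ext IPBC => x /=; rewrite /C !orbA.
- move=> x hB; case/orP => [/orP[hA|/eqP ex]|].
  + apply: (disj2 hB hA); apply: noanc; rewrite /v; lia.
  + by subst x; apply: (disj1 hB); rewrite /v; lia.
  + case/orP => [/eqP ex|hS]; first by subst x; apply: (disj1 hB); lia.
    apply: (disj2 hB hS); apply: noanc; rewrite /v; lia.
- move=> x hA; case/orP => [/orP[hB|/eqP ex]|].
  + apply: (disj2 hB hA); apply: noanc; rewrite /v; lia.
  + by subst x; apply: (disj1 hA); rewrite /v; lia.
  + case/orP => [/eqP ex|hS]; first by subst x; apply: (disj1 hA); lia.
    apply: (disj2 hA hS); apply: noanc; rewrite /v; lia.
- move=> x; case/orP => [/eqP ex|hS].
    subst x; case/orP => [/orP[hA|/eqP ex]|hB].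
    + by apply: (disj1 hA); lia.
    + by move: ex; rewrite /v; lia.
    + by apply: (disj1 hB); lia.
  case/orP => [/orP[hA|/eqP ex]|hB].
  + apply: (disj2 hA hS); apply: noanc; rewrite /v; lia.
  + by subst x; apply: (disj1 hS); rewrite /v; lia.
  + apply: (disj2 hB hS); apply: noanc; rewrite /v; lia.
- move=> x h; rewrite subb_rec (subb_rec v).
  move: h; rewrite /C /A /B.
  by case: (x == i); case: (x == v); case: (subb _ g x); case: (subb _ g x);
    case: (subb _ g.+1 x).
- apply: IH; [lia | exact: hvA].
- apply: IH; [lia | exact: hvB].
- apply: good_mono (IH _ _ _ hv2) => //; [by move=> x h; rewrite /C h orbT | rewrite -!divn2; lia].
Qed.

End Width.

Lemma part2 : exists k N : nat, 0 < k /\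
     forall n : nat, N <= n ->
       forall X : seq {set 'I_n}, is_dpd (@Dn_edge n) X ->
         trunc_log 2 n <= k * dpd_width X.
Proof.
exists 2, 1; split => // n hn X HX.
set t := trunc_log 2 n.+1.
have t0 : 0 < t by rewrite trunc_log_gt0.
have hv : 0.+2 * 2 ^ t.-1 <= n.+1.
  by rewrite -expnS prednK //; apply: trunc_logP.
have [p hp] := good_tree HX (leqnn _) hv.
have hw := cov_width X p (subb 0 t.-1).
have hl : trunc_log 2 n <= t by apply: leq_trunc_log.
move: hp hw hl; rewrite -divn2; lia.
Qed.

Section Pre.
Variable n : nat.
Local Notation aux := (preorder_aux n).

Lemma aux_fwd f i x : x \in aux f i -> x < n /\ exists d, x.+1 %/ 2^d = i.+1.
Proof.
elim: f i => [|f IH] i //=.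
case: ifP => // hi; rewrite inE mem_cat => /orP[/eqP ->|/orP[]/IH[hx [d e]]].
- by split => //; exists 0; rewrite expn0 divn1.
- by split => //; exists d.+1; rewrite div2S e; lia.
- by split => //; exists d.+1; rewrite div2S e; lia.
Qed.

Lemma aux_bwd f i x d : n < i.+1 * 2^f -> x < n -> x.+1 %/ 2^d = i.+1 -> x \in aux f i.
Proof.
elim: f i d => [|f IH] i d hf hx e.
  by exfalso; apply: (below e); rewrite expn0 muln1 in hf; lia.
have hi : i < n.
  have := div_le x.+1 d; rewrite e; lia.
rewrite /= hi inE mem_cat.
case: d e => [|d] e; first by rewrite expn0 divn1 in e; case: e => ->; rewrite eqxx.
rewrite div2S in e.
have [e1|e2] : x.+1 %/ 2^d = i.*2.+2 \/ x.+1 %/ 2^d = i.*2.+3 by lia.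
  by rewrite (IH _ _ _ hx e1) ?orbT //; rewrite expnS in hf; lia.
by rewrite (IH _ _ _ hx e2) ?orbT //; rewrite expnS in hf; lia.
Qed.

Lemma sib_disj x d e i : x.+1 %/ 2^d = i.*2.+2 -> x.+1 %/ 2^e = i.*2.+3 -> False.
Proof. by move=> h1 h2; apply: (incomp h1 h2); apply: noanc; lia. Qed.

Lemma aux_uniq f i : uniq (aux f i).
Proof.
elim: f i => [|f IH] i //=.
case: ifP => // hi; rewrite /= cat_uniq !IH /= andbT mem_cat negb_or.
apply/andP; split; [apply/andP; split|].
- apply/negP => /aux_fwd[_ [d e]]; apply: (below e); lia.
- apply/negP => /aux_fwd[_ [d e]]; apply: (below e); lia.
- apply/hasPn => x /aux_fwd[_ [d e]]; apply/negP => /aux_fwd[_ [d' e']].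
  exact: sib_disj e' e.
Qed.

Lemma parent_S y : 0 < y -> (tree_parent y).+1 = y.+1 %/ 2.
Proof. rewrite /tree_parent -divn2; lia. Qed.

Lemma aux_pb f i y : y \in aux f i -> 0 < y -> tree_parent y \in aux f i ->
  index (tree_parent y) (aux f i) < index y (aux f i).
Proof.
elim: f i => [|f IH] i //=.
case: ifP => // hi; rewrite !inE.
have hpy z : 0 < z -> tree_parent z < z by rewrite /tree_parent -divn2; lia.
case: (eqVneq i y) => [<- _ y0|hiy /= hy y0].
  case/orP => [/eqP hp|hp]; first by have := hpy _ y0; rewrite hp ltnn.
  have [_ [d e]] : tree_parent i < n /\ exists d, (tree_parent i).+1 %/ 2^d = i.*2.+2 \/
       (tree_parent i).+1 %/ 2^d = i.*2.+3.
    by move: hp; rewrite mem_cat => /orP[]/aux_fwd[h [d e]]; split => //; exists d; [left|right].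
  exfalso; have := hpy _ y0; case: e => e hlt; [apply: (below e) | apply: (below e)]; lia.
case: (eqVneq i (tree_parent y)) => [eip _|hip /= hp].
  by rewrite (negbTE hiy).
rewrite (negbTE hiy) ltnS !index_cat.
move: hy hp; rewrite !mem_cat.
case/orP => hy1; case/orP => hp1.
- by rewrite hy1 hp1 IH.
- exfalso.
  have [_ [d e]] := aux_fwd hy1; have [_ [d' e']] := aux_fwd hp1.
  case: d e => [|d] e.
    by rewrite expn0 divn1 in e; case: e hip => ->; rewrite parent_odd eqxx.
  rewrite expnS divnMA -parent_S // in e.
  exact: sib_disj e e'.
- rewrite hp1; case: ifP => hy2; last first.
    by apply: (leq_trans _ (leq_addr _ _)); rewrite index_mem.
  exfalso.
  have [_ [d e]] := aux_fwd hy2; have [_ [d' e']] := aux_fwd hy1.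
  exact: sib_disj e e'.
- have hpn : tree_parent y \notin aux f i.*2.+1.
    apply/negP => hp2.
    have [_ [d e]] := aux_fwd hp2; have [_ [d' e']] := aux_fwd hp1.
    exact: sib_disj e e'.
  have hyn : y \notin aux f i.*2.+1.
    apply/negP => hy2.
    have [_ [d e]] := aux_fwd hy2; have [_ [d' e']] := aux_fwd hy1.
    exact: sib_disj e e'.
  by rewrite (negbTE hpn) (negbTE hyn) ltn_add2l IH.
Qed.

End Pre.

Section Cross.
Variable n : nat.
Variable S : pred 'I_n.
Hypothesis PC : forall x y : 'I_n, 0 < y -> tree_parent y = x -> S y -> S x.

Definition isdown (a b : 'I_n) : bool := (0 < b) && (tree_parent b == a).

Lemma cross_cons (x y : 'I_n) q :
  crossing S [:: x, y & q] = ((x \in S) != (y \in S)) + crossing S (y :: q).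
Proof. by []. Qed.

Lemma down_cross x q : path isdown x q -> crossing S (x :: q) <= (x \in S).
Proof.
elim: q x => [|y q IH] x //= /andP[hd hp].
rewrite cross_cons; have := IH _ hp.
move: hd => /andP[y0 /eqP hpy].
have := PC y0 hpy; rewrite !unfold_in.
by case: (S x); case: (S y) => //= /(_ isT).
Qed.

Lemma down_path x y q : uniq [:: x, y & q] -> path (@Dn_edge n) x (y :: q) ->
  isdown x y -> path isdown x (y :: q).
Proof.
elim: q x y => [|z q IH] x y /=; first by rewrite andbT => _ _ ->.
move=> hu /and3P[_ hyz hp] hxy; rewrite hxy /=.
have hz : isdown y z.
  move: hyz; rewrite /Dn_edge => /orP[/andP[_ /eqP e]|//].
  move: hxy => /andP[_ /eqP e'].
  move: hu; rewrite !inE => /andP[/negP hx _]; exfalso; apply: hx.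
  apply/orP; right; apply/orP; left; apply/eqP; apply: val_inj => /=; by rewrite -e e'.
have h1 : uniq [:: y, z & q] by case/andP: hu.
have h2 : path (@Dn_edge n) y (z :: q) by rewrite /= hyz hp.
exact: (IH y z h1 h2 hz).
Qed.

Lemma simple_cross x q : uniq (x :: q) -> path (@Dn_edge n) x q ->
  crossing S (x :: q) <= (if x \in S then 1 else 2).
Proof.
elim: q x => [|y q IH] x; first by case: (x \in S).
move=> hu hp.
case hd: (isdown x y).
  apply: leq_trans (down_cross (down_path hu hp hd)) _.
  by case: (x \in S).
move: (hp) => /= /andP[hxy hp'].
have hup : isdown y x.
  by move: hxy hd; rewrite /Dn_edge /isdown => /orP[-> //|->].
rewrite cross_cons.
have := IH y (proj2 (andP hu)) hp'.
move: hup => /andP[x0 /eqP hpx].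
have := PC x0 hpx; rewrite !unfold_in.
case: (S x); case: (S y) => /= h; rewrite ?add0n ?add1n //. all: try lia. all: by have := h isT.
Qed.

End Cross.

Lemma take_pmap n (L : seq nat) i : all (fun x => x < n) L ->
  take i (pmap insub L : seq 'I_n) = pmap insub (take i L).
Proof.
elim: L i => [|a L IH] [|i] //= /andP[ha hL].
  by rewrite insubT.
by rewrite insubT /= IH.
Qed.

Lemma part1 n : z_topological (@Dn_edge n) 2 (preorder n).
Proof.
set L := preorder_aux n n 0.
have hall x : x \in L -> x < n by move/aux_fwd => [].
have hmem x : x < n -> x \in L.
  move=> hx.
  have hn : n < 1 * 2 ^ n by rewrite mul1n; apply: ltn_expl.
  have /andP[h1 h2] : 2 ^ trunc_log 2 x.+1 <= x.+1 < 2 ^ (trunc_log 2 x.+1).+1 :=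
    trunc_log_bounds (isT : 1 < 2) (ltn0Sn x).
  have e : x.+1 %/ 2 ^ (trunc_log 2 x.+1) = 1.
    apply/eqP; rewrite eqn_leq; apply/andP; split.
      by rewrite -ltnS ltn_divLR ?expn_gt0 //; move: h2; rewrite expnS; lia.
    by rewrite leq_divRL ?expn_gt0 // mul1n.
  exact: (aux_bwd hn hx e).
have hu : uniq (preorder n) by apply: pmap_sub_uniq; apply: aux_uniq.
split.
  rewrite /is_ordering hu /=; apply/eqP.
  move/card_uniqP: (hu) => <-; apply: eq_card => x.
  by rewrite /preorder mem_pmap_sub (hmem _ (ltn_ord x)).
move=> i p /andP[hup hpp].
have PC : forall x y : 'I_n, 0 < y -> tree_parent y = x ->
    (fun z => z \in take i (preorder n)) y -> (fun z => z \in take i (preorder n)) x.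
  move=> x y y0 hxy /=.
  rewrite /preorder take_pmap; last by apply/allP => z /hall.
  rewrite !mem_pmap_sub !(in_take _ (hmem _ (ltn_ord _))) => hy.
  apply: leq_trans hy; rewrite -hxy; apply: ltnW; apply: aux_pb => //.
    exact: hmem (ltn_ord y).
  by rewrite hxy; exact: hmem (ltn_ord x).
case: p hup hpp => [|x q] // hup hpp.
apply: leq_trans (simple_cross PC hup hpp) _.
by case: ifP.
Qed.

Theorem mainTheorem4 :
  (forall n : nat, z_topological (@Dn_edge n) 2 (preorder n)) /\
  (exists k N : nat, 0 < k /\
     forall n : nat, N <= n ->
       forall X : seq {set 'I_n}, is_dpd (@Dn_edge n) X ->
         trunc_log 2 n <= k * dpd_width X).
Proof. split; [exact: part1 | exact: part2]. Qed.
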